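(* Let $\Pi_1=\{w\in\mathbb C^2:\operatorname{Im}(w_1+w_2)=0\}$ and $\Pi_2=\{w\in\mathbb C^2:\operatorname{Im}(w_1-w_2)=0\}$, and let $F(w_1,w_2)=(w_1,w_2^2)$. Then $F^{-1}(\Gamma)=\Pi_1\cup\Pi_2$ where $\Gamma=\{\operatorname{Im}(z_1+\sqrt{z_2})=0\}\cup\{\operatorname{Im}(z_1-\sqrt{z_2})=0\}$, and every neighbourhood of $0$ in $\mathbb C^2$ contains a neighbourhood of $0$ that is filled by a continuous family of holomorphic discs with boundaries in $\Pi_1\cup\Pi_2$, contracting to $0$.
   Context: A holomorphic disc is a map from the closed unit disc continuous up to the boundary and holomorphic in the interior; its boundary is the image of the unit circle. *)

(* Defs.v *)
From Stdlib Require Import Reals Lra.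
Open Scope R_scope.

Definition Cx : Type := (R * R)%type.
Definition Re (z : Cx) : R := fst z.
Definition Im (z : Cx) : R := snd z.
Definition C0 : Cx := (0, 0).
Definition Cadd (z w : Cx) : Cx := (fst z + fst w, snd z + snd w).
Definition Copp (z : Cx) : Cx := (- fst z, - snd z).
Definition Csub (z w : Cx) : Cx := Cadd z (Copp w).
Definition Cmul (z w : Cx) : Cx :=
  (fst z * fst w - snd z * snd w, fst z * snd w + snd z * fst w).
Definition Cnorm (z : Cx) : R := sqrt (fst z * fst z + snd z * snd z).

Definition C2 : Type := (Cx * Cx)%type.
Definition C2zero : C2 := (C0, C0).
Definition C2norm (w : C2) : R :=
  sqrt (Cnorm (fst w) * Cnorm (fst w) + Cnorm (snd w) * Cnorm (snd w)).
Definition C2dist (w v : C2) : R :=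
  C2norm (Csub (fst w) (fst v), Csub (snd w) (snd v)).

Definition nbhd0 (S : C2 -> Prop) : Prop :=
  exists r, 0 < r /\ forall w, C2norm w < r -> S w.

Definition Pi1 (w : C2) : Prop := Im (Cadd (fst w) (snd w)) = 0.
Definition Pi2 (w : C2) : Prop := Im (Csub (fst w) (snd w)) = 0.
Definition F (w : C2) : C2 := (fst w, Cmul (snd w) (snd w)).
(* Gamma = {Im(z1 + sqrt z2) = 0} U {Im(z1 - sqrt z2) = 0}: the union over
   both signs means: for one of the two square roots s of z2, Im(z1 + s) = 0. *)
Definition Gamma (z : C2) : Prop :=
  exists s : Cx, Cmul s s = snd z /\ Im (Cadd (fst z) s) = 0.

Definition C_differentiable_at (f : Cx -> Cx) (z : Cx) : Prop :=
  exists L : Cx, forall eps, 0 < eps -> exists delta, 0 < delta /\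
    forall h : Cx, 0 < Cnorm h < delta ->
      Cnorm (Csub (Csub (f (Cadd z h)) (f z)) (Cmul L h)) <= eps * Cnorm h.

Definition closed_disc (z : Cx) : Prop := Cnorm z <= 1.
Definition open_disc (z : Cx) : Prop := Cnorm z < 1.
Definition unit_circle (z : Cx) : Prop := Cnorm z = 1.

Definition holomorphic_disc (f : Cx -> C2) : Prop :=
  (forall z, closed_disc z -> forall eps, 0 < eps -> exists delta, 0 < delta /\
     forall z', closed_disc z' -> Cnorm (Csub z' z) < delta ->
       C2dist (f z') (f z) < eps) /\
  (forall z, open_disc z ->
     C_differentiable_at (fun u => fst (f u)) z /\
     C_differentiable_at (fun u => snd (f u)) z).

(* parameter spaces: subsets of R^m, points of R^m as nat -> R
   (only the first m coordinates matter), with the max distance *)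
Fixpoint distRm (m : nat) (s t : nat -> R) : R :=
  match m with
  | O => 0
  | S k => Rmax (Rabs (s k - t k)) (distRm k s t)
  end.
Definition eqRm (m : nat) (s t : nat -> R) : Prop := forall i, (i < m)%nat -> s i = t i.

Definition family_continuous (m : nat) (P : (nat -> R) -> Prop)
  (Phi : (nat -> R) -> Cx -> C2) : Prop :=
  forall t z, P t -> closed_disc z -> forall eps, 0 < eps -> exists delta, 0 < delta /\
    forall t' z', P t' -> closed_disc z' -> distRm m t' t < delta ->
      Cnorm (Csub z' z) < delta -> C2dist (Phi t' z') (Phi t z) < eps.

Definition path_in (m : nat) (P : (nat -> R) -> Prop) (a b : nat -> R) : Prop :=
  exists g : R -> (nat -> R),
    eqRm m (g 0) a /\ eqRm m (g 1) b /\
    (forall s, 0 <= s <= 1 -> P (g s)) /\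
    (forall s, 0 <= s <= 1 -> forall eps, 0 < eps -> exists delta, 0 < delta /\
       forall s', 0 <= s' <= 1 -> Rabs (s' - s) < delta -> distRm m (g s') (g s) < eps).

(* Main.v *)
Require Import Defs.
From Stdlib Require Import Reals.
Open Scope R_scope.
From Stdlib Require Import Lra Field Psatz Lia.
From Coquelicot Require Import Coquelicot.
Require Import Defs.
Open Scope R_scope.
Open Scope R_scope.

Lemma sq_eq_nonneg a b : 0 <= a -> 0 <= b -> a * a = b * b -> a = b.
Proof. intros; nra. Qed.

Lemma Cmod_sqr (w : C) : Cmod w * Cmod w = fst w * fst w + snd w * snd w.
Proof. unfold Cmod. rewrite sqrt_sqrt. ring. nra. Qed.

Lemma Cmod_fst (w : C) : Rabs (fst w) <= Cmod w.
Proof. apply (re_le_Cmod w). Qed.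

Lemma Cmod_snd (w : C) : Rabs (snd w) <= Cmod w.
Proof. pose proof (Rmax_Cmod w). pose proof (Rmax_r (Rabs (fst w)) (Rabs (snd w))). lra. Qed.

Definition Sq (w : C) : C :=
  (sqrt ((Cmod w + fst w)/2),
   (if Rle_dec 0 (snd w) then 1 else -1) * sqrt ((Cmod w - fst w)/2)).

Lemma Sq_comp (w : C) :
  let s1 := fst (Sq w) in let s2 := snd (Sq w) in
  s1 * s1 - s2 * s2 = fst w /\ 2 * s1 * s2 = snd w /\ 0 <= s1 /\
  s1 * s1 + s2 * s2 = Cmod w /\ (0 <= fst w -> Rabs s2 <= s1).
Proof.
  destruct w as [x y]. simpl.
  pose proof (Cmod_fst (x,y)) as H1. simpl in H1.
  pose proof (Cmod_sqr (x,y)) as H2. simpl in H2.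
  set (r := Cmod (x,y)) in *.
  assert (Hp : 0 <= (r + x)/2) by (apply Rabs_le_between in H1 ||  (pose proof (Rabs_le_between x r); idtac); unfold Rabs in H1; destruct (Rcase_abs x); lra).
  assert (Hq : 0 <= (r - x)/2) by (unfold Rabs in H1; destruct (Rcase_abs x); lra).
  pose proof (sqrt_sqrt _ Hp) as Ep. pose proof (sqrt_sqrt _ Hq) as Eq.
  pose proof (sqrt_pos ((r+x)/2)). pose proof (sqrt_pos ((r-x)/2)).
  set (p := sqrt ((r+x)/2)) in *. set (q := sqrt ((r-x)/2)) in *.
  assert (Hpq : p * q = Rabs y / 2).
  { apply sq_eq_nonneg. nra. pose proof (Rabs_pos y); lra.
    replace (p*q*(p*q)) with ((p*p)*(q*q)) by ring. rewrite Ep, Eq.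
    replace (Rabs y / 2 * (Rabs y / 2)) with ((Rabs y * Rabs y)/4) by field.
    rewrite <- Rabs_mult, Rabs_right by nra. nra. }
  destruct (Rle_dec 0 y) as [Hy|Hy].
  - rewrite Rabs_right in Hpq by lra. repeat split; try nra.
    intros Hx. rewrite Rabs_right by nra. assert (q <= p) by (unfold p, q; apply sqrt_le_1_alt; lra). lra.
  - rewrite Rabs_left in Hpq by lra. repeat split; try nra.
    intros Hx. rewrite Rabs_left1 by nra. assert (q <= p) by (unfold p, q; apply sqrt_le_1_alt; lra). lra.
Qed.

Arguments Sq : simpl never.
Open Scope C_scope.

Lemma Sq_sq (w : C) : Sq w * Sq w = w.
Proof.
  destruct (Sq_comp w) as [E1 [E2 _]].
  destruct w as [x y]. unfold Cmult. simpl in *. f_equal; lra.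
Qed.

Lemma Sq_diff (w w' : C) : (Sq w' - Sq w) * (Sq w' + Sq w) = w' - w.
Proof.
  transitivity (Sq w' * Sq w' - Sq w * Sq w). ring. rewrite !Sq_sq. reflexivity.
Qed.

Lemma Cmod_le (a b : C) :
  (fst a * fst a + snd a * snd a <= fst b * fst b + snd b * snd b)%R -> (Cmod a <= Cmod b)%R.
Proof. intros H. unfold Cmod. apply sqrt_le_1_alt. simpl. lra. Qed.

Lemma Sq_lip (w w' : C) : (0 < fst (Sq w))%R ->
  (Cmod (Sq w' - Sq w) * fst (Sq w) <= Cmod (w' - w))%R.
Proof.
  intros H. rewrite <- (Sq_diff w w'), Cmod_mult.
  apply Rmult_le_compat_l. apply Cmod_ge_0.
  destruct (Sq_comp w') as [_ [_ [H' _]]].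
  pose proof (Cmod_fst (Sq w' + Sq w)). pose proof (Rle_abs (fst (Sq w' + Sq w))).
  change (fst (Sq w' + Sq w)) with (fst (Sq w') + fst (Sq w))%R in *. lra.
Qed.

Lemma Sq_hold (w w' : C) : (0 <= fst w)%R -> (0 <= fst w')%R ->
  (Cmod (Sq w' - Sq w) * Cmod (Sq w' - Sq w) <= Cmod (w' - w))%R.
Proof.
  intros Hw Hw'. rewrite <- (Sq_diff w w'), Cmod_mult.
  apply Rmult_le_compat_l. apply Cmod_ge_0.
  apply Cmod_le.
  destruct (Sq_comp w) as [_ [_ [A1 [_ A2]]]].
  destruct (Sq_comp w') as [_ [_ [B1 [_ B2]]]].
  specialize (A2 Hw). specialize (B2 Hw').
  destruct (Sq w) as [s1 s2]; destruct (Sq w') as [t1 t2]. simpl in *.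
  assert (t1 * s1 + t2 * s2 >= 0)%R.
  { assert (Rabs t2 * Rabs s2 <= t1 * s1)%R by (apply Rmult_le_compat; auto; apply Rabs_pos).
    rewrite <- Rabs_mult in H. pose proof (Rabs_le_between (t2*s2) (t1*s1)).
    assert (- (t1*s1) <= t2 * s2)%R. { unfold Rabs in H. destruct (Rcase_abs (t2*s2)); lra. } lra. }
  nra.
Qed.

Lemma Cmod_sub_sym (a b : C) : Cmod (a - b) = Cmod (b - a).
Proof. replace (a - b) with (- (b - a)) by ring. apply Cmod_opp. Qed.

Definition ctn (D : C -> Prop) (f : C -> C) (z : C) : Prop :=
  forall eps, (0 < eps)%R -> exists d, (0 < d)%R /\
    forall z', D z' -> (Cmod (z' - z) < d)%R -> (Cmod (f z' - f z) < eps)%R.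

Lemma ctn_const D c z : ctn D (fun _ => c) z.
Proof. intros eps He. exists 1%R. split. lra. intros. replace (c - c) with (RtoC 0) by ring.
  rewrite Cmod_0. lra. Qed.

Lemma ctn_id D z : ctn D (fun x => x) z.
Proof. intros eps He. exists eps. split; auto. Qed.

Lemma ctn_add D f g z : ctn D f z -> ctn D g z -> ctn D (fun x => f x + g x) z.
Proof.
  intros Hf Hg eps He.
  destruct (Hf (eps/2)%R) as [d1 [Hd1 H1]]. lra.
  destruct (Hg (eps/2)%R) as [d2 [Hd2 H2]]. lra.
  exists (Rmin d1 d2). split. apply Rmin_pos; auto.
  intros z' Dz Hz. replace (f z' + g z' - (f z + g z)) with ((f z' - f z) + (g z' - g z)) by ring.
  eapply Rle_lt_trans. apply Cmod_triangle.
  assert (Cmod (f z' - f z) < eps/2)%R by (apply H1; auto; eapply Rlt_le_trans; eauto; apply Rmin_l).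
  assert (Cmod (g z' - g z) < eps/2)%R by (apply H2; auto; eapply Rlt_le_trans; eauto; apply Rmin_r).
  lra.
Qed.

Lemma ctn_mul D f g z : ctn D f z -> ctn D g z -> ctn D (fun x => f x * g x) z.
Proof.
  intros Hf Hg eps He.
  set (Mf := (Cmod (f z) + 1)%R). set (Mg := (Cmod (g z) + 1)%R).
  assert (0 < Mf)%R by (unfold Mf; pose proof (Cmod_ge_0 (f z)); lra).
  assert (0 < Mg)%R by (unfold Mg; pose proof (Cmod_ge_0 (g z)); lra).
  destruct (Hf (eps/(2*Mg))%R) as [d1 [Hd1 H1]]. apply Rdiv_lt_0_compat; lra.
  destruct (Hg (Rmin 1 (eps/(2*Mf)))%R) as [d2 [Hd2 H2]]. apply Rmin_pos. lra. apply Rdiv_lt_0_compat; lra.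
  exists (Rmin d1 d2). split. apply Rmin_pos; auto.
  intros z' Dz Hz.
  assert (A1 : (Cmod (f z' - f z) < eps/(2*Mg))%R) by (apply H1; auto; eapply Rlt_le_trans; eauto; apply Rmin_l).
  assert (A2 : (Cmod (g z' - g z) < Rmin 1 (eps/(2*Mf)))%R) by (apply H2; auto; eapply Rlt_le_trans; eauto; apply Rmin_r).
  pose proof (Rmin_l 1 (eps/(2*Mf))). pose proof (Rmin_r 1 (eps/(2*Mf))).
  assert (Bg : (Cmod (g z') <= Mg)%R).
  { replace (g z') with ((g z' - g z) + g z) by ring. eapply Rle_trans. apply Cmod_triangle. unfold Mg; lra. }
  replace (f z' * g z' - f z * g z) with ((f z' - f z) * g z' + f z * (g z' - g z)) by ring.
  eapply Rle_lt_trans. apply Cmod_triangle. rewrite !Cmod_mult.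
  assert (E1 : (Cmod (f z' - f z) * Cmod (g z') < eps/(2*Mg) * Mg)%R).
  { pose proof (Cmod_ge_0 (f z' - f z)). pose proof (Cmod_ge_0 (g z')). nra. }
  assert (E2 : (Cmod (f z) * Cmod (g z' - g z) <= Mf * (eps/(2*Mf)))%R).
  { apply Rmult_le_compat; try apply Cmod_ge_0; first [lra | unfold Mf; lra]. }
  replace (eps/(2*Mg) * Mg)%R with (eps/2)%R in * by (field; lra).
  replace (Mf * (eps/(2*Mf)))%R with (eps/2)%R in * by (field; lra).
  lra.
Qed.

Lemma ctn_inv D f z : ctn D f z -> f z <> 0 -> ctn D (fun x => / f x) z.
Proof.
  intros Hf Hz eps He.
  set (a := Cmod (f z)). assert (Ha : (0 < a)%R) by (apply Cmod_gt_0; auto).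
  destruct (Hf (Rmin (a/2) (eps * a * a / 2))%R) as [d [Hd H]].
  { apply Rmin_pos. lra. apply Rdiv_lt_0_compat; try lra. repeat apply Rmult_lt_0_compat; lra. }
  exists d. split; auto. intros z' Dz Hz'. specialize (H z' Dz Hz').
  pose proof (Rmin_l (a/2) (eps * a * a / 2)). pose proof (Rmin_r (a/2) (eps * a * a / 2)).
  assert (Hf' : (a/2 <= Cmod (f z'))%R).
  { assert (Cmod (f z) <= Cmod (f z - f z') + Cmod (f z'))%R.
    { replace (f z) with ((f z - f z') + f z') at 1 by ring. apply Cmod_triangle. }
    rewrite Cmod_sub_sym in H. fold a in H2. lra. }
  assert (Hnz : f z' <> 0) by (apply Cmod_gt_0; lra).
  replace (/ f z' - / f z) with ((f z - f z') * / f z' * / f z) by (field; auto).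
  rewrite !Cmod_mult, !Cmod_inv by auto. fold a. rewrite Cmod_sub_sym.
  set (e := Cmod (f z' - f z)) in *. set (b := Cmod (f z')) in *.
  assert (0 < b)%R by lra.
  apply (Rmult_lt_reg_r (b * a)). nra.
  replace (e * / b * / a * (b * a))%R with e by (field; lra).
  assert (e < eps * a * a / 2)%R by lra. assert (0 <= eps * a * (b - a/2))%R by (apply Rmult_le_pos; [nra|lra]). lra.
Qed.

Definition Deriv (f : C -> C) (z L : C) : Prop :=
  exists rho, (0 < rho)%R /\ exists phi, phi z = L /\ ctn (fun _ => True) phi z /\
    forall z', (Cmod (z' - z) < rho)%R -> f z' - f z = phi z' * (z' - z).

Definition Der f z := exists L, Deriv f z L.

Lemma ctn_weaken D f z : ctn (fun _ => True) f z -> ctn D f z.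
Proof. intros H eps He. destruct (H eps He) as [d [Hd H']]. exists d; split; auto. Qed.

Lemma deriv_ctn D f z : Der f z -> ctn D f z.
Proof.
  intros [L [rho [Hr [phi [E [Hc Hid]]]]]] eps He.
  destruct (Hc 1%R) as [d1 [Hd1 H1]]. lra.
  set (M := (Cmod L + 1)%R). assert (0 < M)%R by (unfold M; pose proof (Cmod_ge_0 L); lra).
  exists (Rmin (Rmin rho d1) (eps / M)). split.
  { repeat apply Rmin_pos; auto. apply Rdiv_lt_0_compat; lra. }
  intros z' _ Hz.
  pose proof (Rmin_l (Rmin rho d1) (eps / M)). pose proof (Rmin_r (Rmin rho d1) (eps / M)).
  pose proof (Rmin_l rho d1). pose proof (Rmin_r rho d1).
  rewrite Hid by lra. rewrite Cmod_mult.
  assert (Hp : (Cmod (phi z') <= M)%R).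
  { specialize (H1 z' I ltac:(lra)). rewrite E in H1.
    replace (phi z') with ((phi z' - L) + L) by ring. eapply Rle_trans. apply Cmod_triangle.
    unfold M; lra. }
  assert (Cmod (z' - z) < eps / M)%R by lra.
  pose proof (Cmod_ge_0 (phi z')). pose proof (Cmod_ge_0 (z' - z)).
  replace eps with (M * (eps / M))%R by (field; lra). nra.
Qed.

Lemma der_const c z : Der (fun _ => c) z.
Proof. exists 0. exists 1%R. split. lra. exists (fun _ => 0). split; auto. split. apply ctn_const.
  intros. ring. Qed.

Lemma der_id z : Der (fun x => x) z.
Proof. exists 1. exists 1%R. split. lra. exists (fun _ => 1). split; auto. split. apply ctn_const.
  intros. ring. Qed.

Lemma der_add f g z : Der f z -> Der g z -> Der (fun x => f x + g x) z.
Proof.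
  intros [L1 [r1 [Hr1 [p1 [E1 [C1 I1]]]]]] [L2 [r2 [Hr2 [p2 [E2 [C2 I2]]]]]].
  exists (L1 + L2). exists (Rmin r1 r2). split. apply Rmin_pos; auto.
  exists (fun x => p1 x + p2 x). split. rewrite E1, E2; auto. split. apply ctn_add; auto.
  intros z' Hz. pose proof (Rmin_l r1 r2). pose proof (Rmin_r r1 r2).
  replace (f z' + g z' - (f z + g z)) with ((f z' - f z) + (g z' - g z)) by ring.
  rewrite I1, I2 by lra. ring.
Qed.

Lemma der_mul f g z : Der f z -> Der g z -> Der (fun x => f x * g x) z.
Proof.
  intros Hf Hg. pose proof (deriv_ctn (fun _ => True) g z Hg) as Cg.
  destruct Hf as [L1 [r1 [Hr1 [p1 [E1 [C1 I1]]]]]]. destruct Hg as [L2 [r2 [Hr2 [p2 [E2 [C2 I2]]]]]].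
  exists (p1 z * g z + f z * p2 z). exists (Rmin r1 r2). split. apply Rmin_pos; auto.
  exists (fun x => p1 x * g x + f z * p2 x). split. auto. split.
  { apply ctn_add; apply ctn_mul; auto; apply ctn_const. }
  intros z' Hz. pose proof (Rmin_l r1 r2). pose proof (Rmin_r r1 r2).
  replace (f z' * g z' - f z * g z) with ((f z' - f z) * g z' + f z * (g z' - g z)) by ring.
  rewrite I1, I2 by lra. ring.
Qed.

Lemma der_inv f z : Der f z -> f z <> 0 -> Der (fun x => / f x) z.
Proof.
  intros Hf Hz. pose proof (deriv_ctn (fun _ => True) f z Hf) as Cf.
  destruct Hf as [L1 [r1 [Hr1 [p1 [E1 [C1 I1]]]]]].
  set (a := Cmod (f z)). assert (Ha : (0 < a)%R) by (apply Cmod_gt_0; auto).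
  destruct (Cf (a/2)%R) as [d [Hd Hc]]. lra.
  exists (-1 * p1 z * / (f z * f z)). exists (Rmin r1 d). split. apply Rmin_pos; auto.
  exists (fun x => -1 * p1 x * / (f x * f z)). split. auto. split.
  { apply ctn_mul. apply ctn_mul; auto; apply ctn_const. apply ctn_inv.
    apply ctn_mul; auto; apply ctn_const. apply Cmult_neq_0; auto. }
  intros z' Hz'. pose proof (Rmin_l r1 d). pose proof (Rmin_r r1 d).
  assert (Hnz : f z' <> 0).
  { specialize (Hc z' I ltac:(lra)). intro Z. rewrite Z in Hc.
    replace (0 - f z) with (- f z) in Hc by ring. rewrite Cmod_opp in Hc. fold a in Hc. lra. }
  replace (/ f z' - / f z) with (-1 * (f z' - f z) * / (f z' * f z)) by (field; auto).
  rewrite I1 by lra. field. auto.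
Qed.

Lemma Sq_fst_pos (w : C) : w <> 0 -> (0 <= fst w)%R -> (0 < fst (Sq w))%R.
Proof.
  intros Hw Hx. unfold Sq. simpl. apply sqrt_lt_R0.
  assert (0 < Cmod w)%R by (apply Cmod_gt_0; auto). lra.
Qed.

Lemma der_sqrt g z : Der g z -> g z <> 0 -> (0 <= fst (g z))%R -> Der (fun x => Sq (g x)) z.
Proof.
  intros Hg Hz Hx. pose proof (deriv_ctn (fun _ => True) g z Hg) as Cg.
  pose proof (Sq_fst_pos _ Hz Hx) as Hp.
  assert (Cs : ctn (fun _ => True) (fun x => Sq (g x)) z).
  { intros eps He. destruct (Cg (eps * fst (Sq (g z)))%R) as [d [Hd Hc]]. nra.
    exists d. split; auto. intros z' _ Hz'. specialize (Hc z' I Hz').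
    pose proof (Sq_lip (g z) (g z') Hp).
    apply (Rmult_lt_reg_r (fst (Sq (g z)))); auto. lra. }
  assert (NZ : forall w, Sq w + Sq (g z) <> 0).
  { intros w Z. assert (fst (Sq w + Sq (g z)) = 0%R) by (rewrite Z; reflexivity).
    change (fst (Sq w + Sq (g z))) with (fst (Sq w) + fst (Sq (g z)))%R in H.
    destruct (Sq_comp w) as [_ [_ [H1 _]]]. lra. }
  destruct Hg as [L1 [r1 [Hr1 [p1 [E1 [C1 I1]]]]]].
  exists (p1 z * / (Sq (g z) + Sq (g z))). exists r1. split; auto.
  exists (fun x => p1 x * / (Sq (g x) + Sq (g z))). split. auto. split.
  { apply ctn_mul; auto. apply ctn_inv; auto. apply ctn_add; auto. apply ctn_const. }
  intros z' Hz'.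
  assert (E : Sq (g z') - Sq (g z) = (g z' - g z) * / (Sq (g z') + Sq (g z))).
  { rewrite <- (Sq_diff (g z) (g z')). field. auto. }
  rewrite E, I1 by auto. ring.
Qed.

Lemma Cnorm_Cmod (z : C) : Cnorm z = Cmod z.
Proof. unfold Cnorm, Cmod. f_equal. simpl. ring. Qed.

Lemma add_sub_l (z h : C) : z + h - z = h.
Proof. ring. Qed.
Lemma mul_sub_r (a b h : C) : a * h - b * h = (a - b) * h.
Proof. ring. Qed.

Lemma der_diff f z : Der f z -> C_differentiable_at f z.
Proof.
  intros [L [rho [Hr [phi [E [Hc Hid]]]]]]. exists L. intros eps He.
  destruct (Hc eps He) as [d [Hd H]]. exists (Rmin rho d). split. apply Rmin_pos; auto.
  intros h [Hh1 Hh2]. pose proof (Rmin_l rho d). pose proof (Rmin_r rho d).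
  change (Csub (Csub (f (Cadd z h)) (f z)) (Cmul L h)) with ((f (z + h) - f z) - L * h).
  specialize (Hid (z + h)). rewrite add_sub_l in Hid.
  rewrite Hid by (rewrite Cnorm_Cmod in Hh2; lra).
  rewrite mul_sub_r.
  rewrite !Cnorm_Cmod. rewrite Cmod_mult. apply Rmult_le_compat_r. apply Cmod_ge_0.
  rewrite <- E. left. apply H. auto. rewrite add_sub_l.
  rewrite Cnorm_Cmod in Hh2. lra.
Qed.

Open Scope R_scope.
Open Scope C_scope.

Definition Aq (z : C) : C := Sq (RtoC 1 + RtoC (-1) * z).
Definition Bq (z : C) : C := Sq (RtoC 1 + z).
Definition c1 : C := (1%R, (-1)%R).
Definition c2 : C := (1%R, 1%R).
Definition D1 (z : C) : C := Bq z + c1 * Aq z.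
Definition D2 (z : C) : C := Bq z + c2 * Aq z.
Definition G1 (z : C) : C := Bq z * / D1 z.
Definition G2 (z : C) : C := Bq z * / D2 z.
Definition H1 (z : C) : C := RtoC 5 * G1 z + RtoC (-2).
Definition H2 (z : C) : C := RtoC 2 + RtoC (-5) * G2 z.

Definition CD (z : C) : Prop := (Cmod z <= 1)%R.

Lemma CD_fst z : CD z -> (0 <= fst (RtoC 1 + RtoC (-1) * z)%C)%R /\ (0 <= fst (RtoC 1 + z)%C)%R.
Proof.
  unfold CD; intros H. pose proof (Cmod_fst z). destruct z as [x y]. simpl in *.
  unfold Rabs in H0. destruct (Rcase_abs x); split; lra.
Qed.

Lemma CD_sum z : CD z -> (2 <= Cmod (RtoC 1 + RtoC (-1) * z)%C + Cmod (RtoC 1 + z)%C)%R.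
Proof.
  intros _. pose proof (Cmod_triangle (RtoC 1 + RtoC (-1) * z) (RtoC 1 + z)).
  replace (RtoC 1 + RtoC (-1) * z + (RtoC 1 + z)) with (RtoC 2) in H.
  rewrite Cmod_R, Rabs_right in H by lra. lra.
  unfold RtoC. destruct z. unfold Cplus, Cmult. simpl. f_equal; ring.
Qed.

Lemma CD_le2 z : CD z -> (Cmod (RtoC 1 + z)%C <= 2)%R.
Proof. unfold CD; intros H. eapply Rle_trans. apply Cmod_triangle. rewrite Cmod_1. lra. Qed.

Lemma quad_lower a1 a2 b1 b2 : (-a1 <= a2 <= a1 -> -b1 <= b2 <= b1 ->
  2 <= a1*a1 + a2*a2 + (b1*b1 + b2*b2) ->
  1/2 <= (b1+a1+a2)*(b1+a1+a2) + (b2+a2-a1)*(b2+a2-a1))%R.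
Proof.
  Local Open Scope R_scope.
  intros Ha Hb S. set (Rr := (b1+a1+a2)%R). set (Ii := (b2+a2-a1)%R).
  assert (0 <= b1 <= Rr) by (unfold Rr; lra).
  assert (b1*b1+b2*b2 <= 2*(Rr*Rr)) by nra.
  assert (0 <= a1+a2 <= Rr) by (unfold Rr; lra).
  assert ((a1+a2)*(a1+a2) <= Rr*Rr) by nra.
  assert (0 <= a1-a2 <= Rr - Ii) by (unfold Rr, Ii; lra).
  assert ((a1-a2)*(a1-a2) <= (Rr-Ii)*(Rr-Ii)) by nra.
  assert (a1*a1+a2*a2 = ((a1+a2)*(a1+a2)+(a1-a2)*(a1-a2))/2) by field.
  nra.
Qed.

Open Scope C_scope.

Lemma D_lower z : CD z -> (1/2 <= Cmod (D1 z) * Cmod (D1 z))%R /\ (1/2 <= Cmod (D2 z) * Cmod (D2 z))%R.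
Proof.
  intros H. destruct (CD_fst z H) as [Fa Fb]. pose proof (CD_sum z H) as S.
  destruct (Sq_comp (RtoC 1 + RtoC (-1) * z)) as [_ [_ [_ [Ma Sa]]]].
  destruct (Sq_comp (RtoC 1 + z)) as [_ [_ [_ [Mb Sb]]]].
  specialize (Sa Fa). specialize (Sb Fb).
  unfold D1, D2. rewrite !Cmod_sqr. unfold Aq, Bq in *.
  set (a := Sq (RtoC 1 + RtoC (-1) * z)) in *. set (b := Sq (RtoC 1 + z)) in *.
  destruct a as [a1 a2]; destruct b as [b1 b2]. unfold c1, c2. simpl in *.
  rewrite <- Ma, <- Mb in S.
  apply Rabs_le_between in Sa. apply Rabs_le_between in Sb.
  split. pose proof (quad_lower a1 a2 b1 b2 ltac:(lra) ltac:(lra) ltac:(nra)). nra.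
  pose proof (quad_lower a1 (-a2) b1 (-b2) ltac:(lra) ltac:(lra) ltac:(nra)). nra.
Qed.

Lemma D_nz z : CD z -> D1 z <> 0 /\ D2 z <> 0.
Proof.
  intros H. destruct (D_lower z H). split; apply Cmod_gt_0; pose proof (Cmod_ge_0 (D1 z)); pose proof (Cmod_ge_0 (D2 z)); nra.
Qed.

Lemma G_bound z : CD z -> (Cmod (G1 z) <= 2)%R /\ (Cmod (G2 z) <= 2)%R.
Proof.
  intros H. destruct (D_lower z H) as [L1 L2]. destruct (D_nz z H) as [N1 N2].
  pose proof (CD_le2 z H). destruct (CD_fst z H) as [_ Fb].
  destruct (Sq_comp (RtoC 1 + z)) as [_ [_ [_ [Mb _]]]].
  assert (EB : (Cmod (Bq z) * Cmod (Bq z) <= 2)%R).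
  { rewrite Cmod_sqr. unfold Bq. lra. }
  unfold G1, G2. rewrite !Cmod_mult, !Cmod_inv by auto.
  pose proof (Cmod_ge_0 (Bq z)). pose proof (Cmod_ge_0 (D1 z)). pose proof (Cmod_ge_0 (D2 z)).
  assert (0 < Cmod (D1 z))%R by nra. assert (0 < Cmod (D2 z))%R by nra.
  split.
  - set (d := Cmod (D1 z)) in *. set (b := Cmod (Bq z)) in *.
    assert (b * / d * d = b)%R by (field; lra).
    assert (0 <= b * / d)%R by (apply Rmult_le_pos; auto; left; apply Rinv_0_lt_compat; auto).
    set (g := (b * / d)%R) in *. assert (g*g*(d*d) <= 2)%R by (replace (g*g*(d*d))%R with (b*b)%R by (rewrite <- H8; ring); lra).
    assert (g*g*(1/2) <= g*g*(d*d))%R by (apply Rmult_le_compat_l; nra). nra.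
  - set (d := Cmod (D2 z)) in *. set (b := Cmod (Bq z)) in *.
    assert (b * / d * d = b)%R by (field; lra).
    assert (0 <= b * / d)%R by (apply Rmult_le_pos; auto; left; apply Rinv_0_lt_compat; auto).
    set (g := (b * / d)%R) in *. assert (g*g*(d*d) <= 2)%R by (replace (g*g*(d*d))%R with (b*b)%R by (rewrite <- H8; ring); lra).
    assert (g*g*(1/2) <= g*g*(d*d))%R by (apply Rmult_le_compat_l; nra). nra.
Qed.

Lemma H_bound z : CD z -> (Cmod (H1 z) <= 12)%R /\ (Cmod (H2 z) <= 12)%R.
Proof.
  intros H. destruct (G_bound z H) as [B1 B2]. unfold H1, H2. split.
  - eapply Rle_trans. apply Cmod_triangle. rewrite Cmod_mult, !Cmod_R.
    rewrite Rabs_right, Rabs_left by lra. lra.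
  - eapply Rle_trans. apply Cmod_triangle. rewrite Cmod_mult, !Cmod_R.
    rewrite Rabs_right, Rabs_left by lra. lra.
Qed.

Lemma sumsq0 (u v : R) : (u ^ 2 + v ^ 2 = 0 -> u = 0 /\ v = 0)%R.
Proof. intros H. split; nra. Qed.

Lemma snd_mul_inv (b d : C) : snd (b * / d)%C = ((snd b * fst d - fst b * snd d) / (fst d ^ 2 + snd d ^ 2))%R.
Proof. destruct b as [b1 b2]; destruct d as [d1 d2]. unfold Cmult, Cinv. simpl. unfold Rdiv. ring. Qed.

Lemma snd_H1 z : snd (H1 z) = (5 * snd (G1 z))%R.
Proof. unfold H1. destruct (G1 z). simpl. ring. Qed.
Lemma snd_H2 z : snd (H2 z) = (-5 * snd (G2 z))%R.
Proof. unfold H2. destruct (G2 z). simpl. ring. Qed.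

Lemma H_boundary z : Cmod z = 1%R -> snd (H1 z) = 0%R \/ snd (H2 z) = 0%R.
Proof.
  intros H. assert (HD : CD z) by (unfold CD; lra).
  destruct (CD_fst z HD) as [Fa Fb].
  destruct (Sq_comp (RtoC 1 + RtoC (-1) * z)) as [Ea1 [Ea2 _]].
  destruct (Sq_comp (RtoC 1 + z)) as [Eb1 [Eb2 _]].
  pose proof (Cmod_sqr z) as Mz. rewrite H in Mz.
  rewrite snd_H1, snd_H2. unfold G1, G2. rewrite !snd_mul_inv.
  unfold D1, D2. unfold Aq, Bq in *.
  set (a := Sq (RtoC 1 + RtoC (-1) * z)) in *. set (b := Sq (RtoC 1 + z)) in *.
  destruct a as [a1 a2]; destruct b as [b1 b2]; destruct z as [x y]. unfold c1, c2 in *. simpl in *.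
  set (p := (a1*b1+a2*b2)%R). set (q := (a1*b2-a2*b1)%R).
  assert (PQ : ((p+q)*(p-q) = 0)%R).
  { replace ((p+q)*(p-q))%R with ((b1*b1-b2*b2)*(a1*a1-a2*a2) + (2*b1*b2)*(2*a1*a2))%R by (unfold p, q; ring).
    rewrite Ea1, Ea2, Eb1, Eb2. nra. }
  apply Rmult_integral in PQ. destruct PQ as [P|P]; [left|right].
  - match goal with |- (5 * (?N / _))%R = 0%R => replace N with 0%R by (unfold p, q in P; nra) end.
    unfold Rdiv. ring.
  - match goal with |- (-5 * (?N / _))%R = 0%R => replace N with 0%R by (unfold p, q in P; nra) end.
    unfold Rdiv. ring.
Qed.

Lemma Sq_one : Sq (RtoC 1) = RtoC 1.
Proof.
  unfold Sq. rewrite Cmod_1. simpl. replace ((1+1)/2)%R with 1%R by field.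
  replace ((1-1)/2)%R with 0%R by field. rewrite sqrt_1, sqrt_0. unfold RtoC. f_equal; ring.
Qed.

Lemma H_zero : H1 (RtoC 0) = (0%R, 1%R) /\ H2 (RtoC 0) = (0%R, 1%R).
Proof.
  unfold H1, H2, G1, G2, D1, D2, Aq, Bq.
  replace (RtoC 1 + RtoC (-1) * RtoC 0) with (RtoC 1) by ring.
  replace (RtoC 1 + RtoC 0) with (RtoC 1) by ring.
  rewrite Sq_one. unfold c1, c2, RtoC, Cplus, Cmult, Cinv. simpl.
  split; f_equal; field.
Qed.

Lemma ctn_Aq z : CD z -> ctn CD Aq z.
Proof.
  intros Hz eps He. exists (eps * eps)%R. split. nra.
  intros z' Hz' Hd. destruct (CD_fst z Hz) as [F1 _]. destruct (CD_fst z' Hz') as [F2 _].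
  pose proof (Sq_hold _ _ F1 F2).
  replace (RtoC 1 + RtoC (-1) * z' - (RtoC 1 + RtoC (-1) * z)) with (-(z' - z)) in H by ring.
  rewrite Cmod_opp in H. unfold Aq. pose proof (Cmod_ge_0 (Sq (RtoC 1 + RtoC (-1) * z') - Sq (RtoC 1 + RtoC (-1) * z))).
  nra.
Qed.

Lemma ctn_Bq z : CD z -> ctn CD Bq z.
Proof.
  intros Hz eps He. exists (eps * eps)%R. split. nra.
  intros z' Hz' Hd. destruct (CD_fst z Hz) as [_ F1]. destruct (CD_fst z' Hz') as [_ F2].
  pose proof (Sq_hold _ _ F1 F2).
  replace (RtoC 1 + z' - (RtoC 1 + z)) with (z' - z) in H by ring.
  unfold Bq. pose proof (Cmod_ge_0 (Sq (RtoC 1 + z') - Sq (RtoC 1 + z))).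
  nra.
Qed.

Lemma ctn_H z : CD z -> ctn CD H1 z /\ ctn CD H2 z.
Proof.
  intros Hz. destruct (D_nz z Hz) as [N1 N2]. pose proof (ctn_Aq z Hz). pose proof (ctn_Bq z Hz).
  split; unfold H1, H2, G1, G2.
  - apply ctn_add; [|apply ctn_const]. apply ctn_mul; [apply ctn_const|]. apply ctn_mul; auto.
    apply ctn_inv; auto. unfold D1. apply ctn_add; auto. apply ctn_mul; auto. apply ctn_const.
  - apply ctn_add; [apply ctn_const|]. apply ctn_mul; [apply ctn_const|]. apply ctn_mul; auto.
    apply ctn_inv; auto. unfold D2. apply ctn_add; auto. apply ctn_mul; auto. apply ctn_const.
Qed.

Lemma der_H z : (Cmod z < 1)%R -> Der H1 z /\ Der H2 z.
Proof.
  intros Hz. assert (HD : CD z) by (unfold CD; lra).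
  destruct (D_nz z HD) as [N1 N2]. destruct (CD_fst z HD) as [Fa Fb].
  assert (DA : Der Aq z).
  { unfold Aq. apply (der_sqrt (fun x => RtoC 1 + RtoC (-1) * x)); auto.
    apply der_add. apply der_const. apply der_mul. apply der_const. apply der_id.
    intro Z. assert (z = RtoC 1).
    { replace z with (RtoC 1 - (RtoC 1 + RtoC (-1) * z)) by ring. rewrite Z. ring. }
    rewrite H in Hz. rewrite Cmod_1 in Hz. lra. }
  assert (DB : Der Bq z).
  { unfold Bq. apply (der_sqrt (fun x => RtoC 1 + x)); auto.
    apply der_add. apply der_const. apply der_id.
    intro Z. assert (z = RtoC (-1)).
    { replace z with ((RtoC 1 + z) - RtoC 1) by ring. rewrite Z. unfold RtoC, Cminus, Cplus, Copp. simpl. f_equal; ring. }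
    rewrite H in Hz. rewrite Cmod_R, Rabs_left in Hz by lra. lra. }
  split; unfold H1, H2, G1, G2.
  - apply der_add; [|apply der_const]. apply der_mul; [apply der_const|]. apply der_mul; auto.
    apply der_inv; auto. unfold D1. apply der_add; auto. apply der_mul; auto. apply der_const.
  - apply der_add; [apply der_const|]. apply der_mul; [apply der_const|]. apply der_mul; auto.
    apply der_inv; auto. unfold D2. apply der_add; auto. apply der_mul; auto. apply der_const.
Qed.

Close Scope C_scope.
Open Scope R_scope.

Lemma distRm_le m a b K : 0 <= K -> (forall i, (i < m)%nat -> Rabs (a i - b i) <= K) -> distRm m a b <= K.
Proof.
  intros HK. induction m; intros H; simpl. lra.
  apply Rmax_lub. apply H; lia. apply IHm. intros; apply H; lia.
Qed.

Lemma distRm_ge m a b i : (i < m)%nat -> Rabs (a i - b i) <= distRm m a b.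
Proof.
  induction m; intros H. lia. simpl.
  destruct (Nat.eq_dec i m). subst. apply Rmax_l.
  eapply Rle_trans. apply IHm. lia. apply Rmax_r.
Qed.

Lemma C2norm_ge (w : C2) : Cnorm (fst w) <= C2norm w /\ Cnorm (snd w) <= C2norm w.
Proof.
  unfold C2norm. pose proof (sqrt_pos (fst (fst w) * fst (fst w) + snd (fst w) * snd (fst w))).
  pose proof (sqrt_pos (fst (snd w) * fst (snd w) + snd (snd w) * snd (snd w))).
  fold (Cnorm (fst w)) in H. fold (Cnorm (snd w)) in H0.
  split; rewrite <- (sqrt_square (Cnorm _)) at 1 by auto; apply sqrt_le_1_alt; nra.
Qed.

Lemma C2norm_le (w : C2) : C2norm w <= Cnorm (fst w) + Cnorm (snd w).
Proof.
  unfold C2norm. pose proof (sqrt_pos (fst (fst w) * fst (fst w) + snd (fst w) * snd (fst w))).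
  pose proof (sqrt_pos (fst (snd w) * fst (snd w) + snd (snd w) * snd (snd w))).
  fold (Cnorm (fst w)) in H. fold (Cnorm (snd w)) in H0.
  rewrite <- (sqrt_square (Cnorm (fst w) + Cnorm (snd w))) by lra. apply sqrt_le_1_alt. nra.
Qed.

Lemma Cmult_eq0 (a b : C) : (a * b)%C = RtoC 0 -> a = RtoC 0 \/ b = RtoC 0.
Proof.
  intros H. assert (Cmod a * Cmod b = 0) by (rewrite <- Cmod_mult, H; apply Cmod_0).
  apply Rmult_integral in H0. destruct H0; [left|right]; apply Cmod_eq_0; auto.
Qed.

Lemma part1 : forall w : C2, Gamma (F w) <-> (Pi1 w \/ Pi2 w).
Proof.
  intros [w1 w2]. unfold Gamma, F, Pi1, Pi2. simpl. split.
  - intros [s [E I]]. change C in s, w1, w2.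
    assert (((s - w2) * (s + w2))%C = RtoC 0).
    { transitivity (Cmult s s - Cmult w2 w2)%C. ring. change Cmul with Cmult in E. rewrite E. ring. }
    apply Cmult_eq0 in H. destruct H as [H|H].
    + left. assert (s = w2). { replace s with ((s - w2) + w2)%C by ring. rewrite H. ring. }
      subst. auto.
    + right. assert (s = Copp w2). { replace s with ((s + w2) - w2)%C by ring. rewrite H.
        unfold Copp, RtoC, Cminus, Cplus, Coquelicot.Complex.Copp. simpl. f_equal; ring. }
      subst. auto.
  - intros [H|H].
    + exists w2. split; auto.
    + exists (Copp w2). split; auto. destruct w2. unfold Cmul, Copp. simpl. f_equal; ring.
Qed.

Definition E1 (t : nat -> R) (z : C) : C := (RtoC (t 0%nat) + RtoC (t 2%nat) * H1 z)%C.
Definition E2 (t : nat -> R) (z : C) : C := (RtoC (t 1%nat) + RtoC (t 3%nat) * H2 z)%C.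
Definition Phi (t : nat -> R) (z : Cx) : C2 :=
  ((RtoC (1/2) * (E1 t z + E2 t z))%C, (RtoC (1/2) * (E1 t z - E2 t z))%C).
Definition Pd (d : R) (t : nat -> R) : Prop := forall i, (i < 4)%nat -> Rabs (t i) <= d.

Lemma RtoC_sub a b : (RtoC a - RtoC b)%C = RtoC (a - b).
Proof. unfold RtoC, Cminus, Cplus, Coquelicot.Complex.Copp. simpl. f_equal; ring. Qed.

Lemma Cmod_half a b : Cmod (RtoC (1/2) * (a + b))%C <= (Cmod a + Cmod b)/2.
Proof. rewrite Cmod_mult, Cmod_R, Rabs_right by lra. pose proof (Cmod_triangle a b). lra. Qed.

Lemma Cmod_sub_le (a b : C) : Cmod (a - b)%C <= Cmod a + Cmod b.
Proof. eapply Rle_trans. apply Cmod_triangle. rewrite Cmod_opp. lra. Qed.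

Lemma E_bound d t z : CD z -> Pd d t ->
  Cmod (E1 t z) <= 13 * d /\ Cmod (E2 t z) <= 13 * d.
Proof.
  intros Hz Ht. destruct (H_bound z Hz) as [B1 B2].
  pose proof (Ht 0%nat ltac:(lia)) as Q1. pose proof (Ht 1%nat ltac:(lia)) as Q2.
  pose proof (Ht 2%nat ltac:(lia)) as Q3. pose proof (Ht 3%nat ltac:(lia)) as Q4.
  pose proof (Cmod_ge_0 (H1 z)) as Q5. pose proof (Cmod_ge_0 (H2 z)) as Q6.
  pose proof (Rabs_pos (t 2%nat)) as Q7. pose proof (Rabs_pos (t 3%nat)) as Q8.
  unfold E1, E2. split; eapply Rle_trans; try apply Cmod_triangle;
  rewrite Cmod_mult, !Cmod_R; nra.
Qed.

Lemma E_diff t t' z z' :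
  (E1 t' z' - E1 t z = RtoC (t' 0%nat - t 0%nat) + RtoC (t' 2%nat - t 2%nat) * H1 z' + RtoC (t 2%nat) * (H1 z' - H1 z))%C /\
  (E2 t' z' - E2 t z = RtoC (t' 1%nat - t 1%nat) + RtoC (t' 3%nat - t 3%nat) * H2 z' + RtoC (t 3%nat) * (H2 z' - H2 z))%C.
Proof.
  unfold E1, E2. rewrite <- !RtoC_sub. split; ring.
Qed.

Lemma E_diff_bound d t t' z z' a : CD z' -> 0 <= d -> Pd d t -> 0 <= a ->
  (forall i, (i < 4)%nat -> Rabs (t' i - t i) <= a) ->
  Cmod (E1 t' z' - E1 t z)%C <= 13 * a + d * Cmod (H1 z' - H1 z)%C /\
  Cmod (E2 t' z' - E2 t z)%C <= 13 * a + d * Cmod (H2 z' - H2 z)%C.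
Proof.
  intros Hz' Hd Ht Ha Hta. destruct (H_bound z' Hz') as [B1 B2].
  destruct (E_diff t t' z z') as [e1 e2]. rewrite e1, e2.
  pose proof (Ht 2%nat ltac:(lia)) as Q9. pose proof (Ht 3%nat ltac:(lia)) as Q10.
  pose proof (Hta 0%nat ltac:(lia)) as Q11. pose proof (Hta 1%nat ltac:(lia)) as Q12.
  pose proof (Hta 2%nat ltac:(lia)) as Q13. pose proof (Hta 3%nat ltac:(lia)) as Q14.
  pose proof (Cmod_ge_0 (H1 z')) as Q15. pose proof (Cmod_ge_0 (H2 z')) as Q16.
  pose proof (Cmod_ge_0 (H1 z' - H1 z)%C) as Q17. pose proof (Cmod_ge_0 (H2 z' - H2 z)%C) as Q18.
  pose proof (Rabs_pos (t' 2%nat - t 2%nat)) as Q19. pose proof (Rabs_pos (t' 3%nat - t 3%nat)) as Q20.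
  pose proof (Rabs_pos (t 2%nat)) as Q21. pose proof (Rabs_pos (t 3%nat)) as Q22.
  split; eapply Rle_trans; try apply Cmod_triangle; rewrite !Cmod_mult, !Cmod_R;
  pose proof (Cmod_triangle (RtoC (t' 0%nat - t 0%nat)) (RtoC (t' 2%nat - t 2%nat) * H1 z')%C);
  pose proof (Cmod_triangle (RtoC (t' 1%nat - t 1%nat)) (RtoC (t' 3%nat - t 3%nat) * H2 z')%C);
  rewrite !Cmod_mult, !Cmod_R in *; nra.
Qed.

Lemma CD_closed z : closed_disc z <-> CD z.
Proof. unfold closed_disc, CD. rewrite Cnorm_Cmod. tauto. Qed.

Lemma Phi_dist t t' z z' :
  C2dist (Phi t' z') (Phi t z) <= Cmod (E1 t' z' - E1 t z)%C + Cmod (E2 t' z' - E2 t z)%C.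
Proof.
  unfold C2dist. eapply Rle_trans. apply C2norm_le. simpl. rewrite !Cnorm_Cmod.
  change Csub with Cminus. unfold Phi; simpl.
  replace (RtoC (1 / 2) * (E1 t' z' + E2 t' z') - RtoC (1 / 2) * (E1 t z + E2 t z))%C
    with (RtoC (1/2) * ((E1 t' z' - E1 t z) + (E2 t' z' - E2 t z)))%C by ring.
  replace (RtoC (1 / 2) * (E1 t' z' - E2 t' z') - RtoC (1 / 2) * (E1 t z - E2 t z))%C
    with (RtoC (1/2) * ((E1 t' z' - E1 t z) + - (E2 t' z' - E2 t z)))%C by ring.
  pose proof (Cmod_half (E1 t' z' - E1 t z)%C (E2 t' z' - E2 t z)%C).
  pose proof (Cmod_half (E1 t' z' - E1 t z)%C (- (E2 t' z' - E2 t z))%C).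
  rewrite Cmod_opp in H0. lra.
Qed.

Lemma Phi_cont d : 0 <= d -> family_continuous 4 (Pd d) Phi.
Proof.
  intros Hd t z Pt Cz eps He. apply CD_closed in Cz.
  destruct (ctn_H z Cz) as [K1 K2].
  set (eta := eps / (4 * (d + 1))).
  assert (Heta : 0 < eta) by (unfold eta; apply Rdiv_lt_0_compat; lra).
  destruct (K1 eta Heta) as [d1 [Hd1 I1]]. destruct (K2 eta Heta) as [d2 [Hd2 I2]].
  exists (Rmin (Rmin d1 d2) (eps / 60)). split.
  { repeat apply Rmin_pos; auto. lra. }
  intros t' z' Pt' Cz' Ht Hz. apply CD_closed in Cz'.
  rewrite Cnorm_Cmod in Hz. change Csub with Cminus in Hz.
  pose proof (Rmin_l (Rmin d1 d2) (eps / 60)) as M1. pose proof (Rmin_r (Rmin d1 d2) (eps / 60)) as M2.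
  pose proof (Rmin_l d1 d2) as M3. pose proof (Rmin_r d1 d2) as M4.
  set (a := Rmin (Rmin d1 d2) (eps / 60)) in *.
  assert (Ha : forall i, (i < 4)%nat -> Rabs (t' i - t i) <= a).
  { intros i Hi. pose proof (distRm_ge 4 t' t i Hi). lra. }
  assert (Ha0 : 0 <= a) by (pose proof (Rabs_pos (t' 0%nat - t 0%nat)); pose proof (Ha 0%nat ltac:(lia)); lra).
  destruct (E_diff_bound d t t' z z' a Cz' Hd Pt Ha0 Ha) as [B1 B2].
  assert (J1 : Cmod (H1 z' - H1 z)%C < eta) by (apply I1; auto; lra).
  assert (J2 : Cmod (H2 z' - H2 z)%C < eta) by (apply I2; auto; lra).
  assert (d * eta <= eps / 4).
  { unfold eta. apply (Rmult_le_reg_r (4 * (d+1))). lra.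
    replace (d * (eps / (4 * (d + 1))) * (4 * (d + 1))) with (d * eps) by (field; lra). nra. }
  eapply Rle_lt_trans. apply Phi_dist.
  assert (d * Cmod (H1 z' - H1 z)%C <= d * eta) by (apply Rmult_le_compat_l; lra).
  assert (d * Cmod (H2 z' - H2 z)%C <= d * eta) by (apply Rmult_le_compat_l; lra).
  lra.
Qed.

Lemma mone_mul (a : C) : (RtoC (-1) * a = - a)%C.
Proof. destruct a. unfold RtoC, Cmult, Coquelicot.Complex.Copp. simpl. f_equal; ring. Qed.

Lemma Phi_holo d t : 0 <= d -> Pd d t -> holomorphic_disc (Phi t).
Proof.
  intros Hd Pt. split.
  - intros z Cz eps He. destruct (Phi_cont d Hd t z Pt Cz eps He) as [dl [Hdl H]].
    exists dl. split; auto. intros z' Cz' Hz. apply H; auto.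
    assert (distRm 4 t t <= 0) by (apply distRm_le; [lra | intros; rewrite Rminus_diag, Rabs_R0; lra]).
    lra.
  - intros z Oz. unfold open_disc in Oz. rewrite Cnorm_Cmod in Oz.
    destruct (der_H z Oz) as [D1' D2'].
    assert (DE1 : Der (E1 t) z).
    { unfold E1. apply der_add. apply der_const. apply der_mul. apply der_const. auto. }
    assert (DE2 : Der (E2 t) z).
    { unfold E2. apply der_add. apply der_const. apply der_mul. apply der_const. auto. }
    split; apply der_diff.
    + change (Der (fun u => RtoC (1/2) * (E1 t u + E2 t u))%C z).
      apply der_mul. apply der_const. apply der_add; auto.
    + change (Der (fun u => RtoC (1/2) * (E1 t u - E2 t u))%C z).
      assert (DE2' : Der (fun u => RtoC (-1) * E2 t u)%C z) by (apply der_mul; auto; apply der_const).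
      assert (Der (fun u => RtoC (1/2) * (E1 t u + RtoC (-1) * E2 t u))%C z).
      { apply der_mul. apply der_const. apply der_add; auto. }
      destruct H as [L [rho [Hr [phi [E [Hc Hid]]]]]]. exists L, rho. split; auto. exists phi.
      split; auto. split; auto. intros z' Hz'. rewrite <- Hid by auto. rewrite !mone_mul. ring.
Qed.

Lemma Phi_bdry t z : unit_circle z -> Pi1 (Phi t z) \/ Pi2 (Phi t z).
Proof.
  intros Hz. unfold unit_circle in Hz. rewrite Cnorm_Cmod in Hz.
  destruct (H_boundary z Hz) as [Z|Z]; [left|right]; unfold Pi1, Pi2, Phi, Im, E1, E2;
  set (h1 := H1 z) in *; set (h2 := H2 z) in *; clearbody h1 h2;
  destruct h1 as [p1 p2]; destruct h2 as [q1 q2];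
  unfold Cadd, Csub, Copp, RtoC, Cplus, Cmult, Cminus; simpl in *; subst; ring.
Qed.

Lemma Phi_zero z : Phi (fun _ => 0) z = C2zero.
Proof.
  unfold Phi, E1, E2, C2zero, C0.
  set (h1 := H1 z); set (h2 := H2 z); clearbody h1 h2.
  destruct h1 as [p1 p2]; destruct h2 as [q1 q2].
  unfold RtoC, Cplus, Cmult, Cminus, Coquelicot.Complex.Copp. simpl.
  repeat (apply injective_projections; simpl); ring.
Qed.

Theorem mainTheorem9 :
  (forall w : C2, Gamma (F w) <-> (Pi1 w \/ Pi2 w)) /\
  (forall U : C2 -> Prop, nbhd0 U ->
    exists V : C2 -> Prop,
      nbhd0 V /\ (forall w, V w -> U w) /\
      exists (m : nat) (P : (nat -> R) -> Prop) (Phi : (nat -> R) -> Cx -> C2) (t0 : nat -> R),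
        family_continuous m P Phi /\
        (forall t, P t -> holomorphic_disc (Phi t)) /\
        (forall t z, P t -> unit_circle z -> Pi1 (Phi t z) \/ Pi2 (Phi t z)) /\
        (forall w, V w <-> exists t z, P t /\ closed_disc z /\ Phi t z = w) /\
        P t0 /\ (forall z, closed_disc z -> Phi t0 z = C2zero) /\
        (forall t, P t -> path_in m P t t0)).
Proof.
  split. exact part1.
  intros U [r [Hr HU]].
  set (d := r / 30). assert (Hd : 0 < d) by (unfold d; lra).
  exists (fun w => exists t z, Pd d t /\ closed_disc z /\ Phi t z = w).
  split; [|split].
  - exists (d / 2). split. lra. intros [w1 w2] Hw.
    destruct (C2norm_ge (w1, w2)) as [N1 N2]. simpl in N1, N2. rewrite Cnorm_Cmod in N1, N2.
    assert (Hs : Cmod (w1 + w2)%C < d /\ Cmod (w1 - w2)%C < d).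
    { pose proof (Cmod_triangle w1 w2). pose proof (Cmod_sub_le w1 w2). split; lra. }
    exists (fun i => match i with O => fst (w1 + w2)%C | S O => fst (w1 - w2)%C
                     | S (S O) => snd (w1 + w2)%C | S (S (S O)) => snd (w1 - w2)%C | _ => 0 end), (RtoC 0).
    split; [|split].
    + intros i Hi. pose proof (Cmod_fst (w1 + w2)%C). pose proof (Cmod_fst (w1 - w2)%C).
      pose proof (Cmod_snd (w1 + w2)%C). pose proof (Cmod_snd (w1 - w2)%C).
      destruct i as [|[|[|[|i]]]]; cbv beta iota; try lra; rewrite Rabs_R0; lra.
    + unfold closed_disc. rewrite Cnorm_Cmod, Cmod_0. lra.
    + unfold Phi, E1, E2. destruct H_zero as [Z1 Z2]. rewrite Z1, Z2.
      destruct w1 as [x1 y1]; destruct w2 as [x2 y2].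
      unfold RtoC, Cplus, Cmult, Cminus, Coquelicot.Complex.Copp. simpl.
      repeat (apply injective_projections; simpl); field.
  - intros w [t [z [Pt [Cz E]]]]. subst w. apply HU. apply CD_closed in Cz.
    eapply Rle_lt_trans. apply C2norm_le. rewrite !Cnorm_Cmod. unfold Phi. simpl.
    destruct (E_bound d t z Cz Pt) as [B1 B2].
    pose proof (Cmod_half (E1 t z) (E2 t z)).
    pose proof (Cmod_half (E1 t z) (- E2 t z)%C). rewrite Cmod_opp in H0.
    change (E1 t z - E2 t z)%C with (E1 t z + - E2 t z)%C. unfold d in *. lra.
  - exists 4%nat, (Pd d), Phi, (fun _ => 0).
    split; [apply Phi_cont; lra|].
    split; [intros t Pt; apply (Phi_holo d); auto; lra|].
    split; [intros t z _ Hz; apply Phi_bdry; auto|].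
    split; [intros w; tauto|].
    split; [intros i _; rewrite Rabs_R0; lra|].
    split; [intros z _; apply Phi_zero|].
    intros t Pt. exists (fun s i => (1 - s) * t i).
    split; [intros i _; ring|].
    split; [intros i _; ring|].
    split.
    + intros s Hs i Hi. rewrite Rabs_mult, (Rabs_right (1 - s)) by lra.
      pose proof (Pt i Hi). pose proof (Rabs_pos (t i)). nra.
    + intros s Hs eps He. exists (eps / (d + 1)). split. apply Rdiv_lt_0_compat; lra.
      intros s' Hs' Hss. eapply Rle_lt_trans.
      apply (distRm_le 4 _ _ (Rabs (s' - s) * d)).
      { pose proof (Rabs_pos (s' - s)). nra. }
      { intros i Hi. replace ((1 - s') * t i - (1 - s) * t i) with (- (s' - s) * t i) by ring.
        rewrite Rabs_mult, Rabs_Ropp. pose proof (Pt i Hi). pose proof (Rabs_pos (s' - s)). nra. }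
      pose proof (Rabs_pos (s' - s)).
      assert (Rabs (s' - s) * (d + 1) < eps).
      { apply (Rmult_lt_compat_r (d+1)) in Hss; [|lra].
        replace (eps / (d + 1) * (d + 1)) with eps in Hss by (field; lra). lra. }
      nra.
Qed.
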